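(* Let $n\ge2$, $a\ge\sqrt{n-1}$, $f(x)=a|x^{(1)}|+\sum_{i=2}^n x^{(i)}$ on $\mathbb{R}^n$, $0<c_1<c_2<1$, and $\tau=c_1+\frac{(n-1)(c_1-1)}{a^2}$. Let $x_0\in\mathbb{R}^n$ with $x_0^{(1)}\ne0$, and define iteratively $d_k=-\nabla f(x_k)$, $$t_k=\frac{2|x_k^{(1)}|}{(\tau+1)a},\qquad x_{k+1}=x_k+t_kd_k.$$ Then (1) $A(t_k)$ and $W(t_k)$ both hold for every $k$; and (2) if $\tau\le0$, then $f(x_k)$ is unbounded below as $k\to\infty$.
   Context: $x^{(i)}$ is the $i$-th coordinate. Note $-1<\tau<1$. At iteration $k$, the Armijo condition is $A(t)$: $f(x_k+td_k)\le f(x_k)+c_1t\nabla f(x_k)^Td_k$; the Wolfe condition is $W(t)$: $f$ is differentiable at $x_k+td_k$ and $\nabla f(x_k+td_k)^Td_k\ge c_2\nabla f(x_k)^Td_k$. *)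

(* Defs.v *)
From HB Require Import structures.
From mathcomp Require Import all_boot all_order all_algebra.
From mathcomp Require Import all_classical all_reals all_analysis.
Set Implicit Arguments. Unset Strict Implicit. Unset Printing Implicit Defensive.
Import Order.TTheory GRing.Theory Num.Theory.
Import numFieldNormedType.Exports.
Local Open Scope ring_scope.

Section Defs.
Variables (R : realType) (n : nat).

(* first coordinate x^(1) of x in R^n (indices are 0-based in 'I_n, so this
   is the entry of index 0; well-defined as a genuine coordinate for n >= 1) *)
Definition coord1 (x : 'rV[R]_n) : R := \sum_(i < n | val i == 0%N) x 0 i.

Definition fobj (a : R) (x : 'rV[R]_n) : R :=
  a * `|coord1 x| + \sum_(i < n | val i != 0%N) x 0 i.

Definition dotv (u v : 'rV[R]_n) : R := \sum_(i < n) u 0 i * v 0 i.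

Definition grad (f : 'rV[R]_n -> R) (x : 'rV[R]_n) : 'rV[R]_n :=
  \row_(i < n) ('d f x (delta_mx 0 i : 'rV[R]_n)).

Definition Armijo (f : 'rV[R]_n -> R) (c1 : R) (x d : 'rV[R]_n) (t : R) : Prop :=
  f (x + t *: d) <= f x + c1 * t * dotv (grad f x) d.

Definition Wolfe (f : 'rV[R]_n -> R) (c2 : R) (x d : 'rV[R]_n) (t : R) : Prop :=
  differentiable f (x + t *: d) /\
  dotv (grad f (x + t *: d)) d >= c2 * dotv (grad f x) d.

End Defs.

(* Main.v *)
Require Import Defs.
From HB Require Import structures.
From mathcomp Require Import all_boot all_order all_algebra.
From mathcomp Require Import all_classical all_reals all_analysis.
From mathcomp Require Import ring lra.
Import Order.TTheory GRing.Theory Num.Theory.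
Import numFieldNormedType.Exports.
Local Open Scope ring_scope.

Section G.
Variables (R : realType) (n : nat).
Definition dlin (w : 'rV[R]_n) (h : 'rV[R]_n) : R := \sum_i w 0 i * h 0 i.
Lemma dlin_lin w : linear (dlin w).
Proof.
move=> k u v; rewrite /dlin scaler_sumr -big_split /=; apply: eq_bigr => i _.
by rewrite !mxE mulrDr mulrCA.
Qed.
HB.instance Definition _ w := GRing.isLinear.Build R 'rV[R]_n R *:%R (dlin w) (dlin_lin w).

Lemma dlin_cont w : continuous (dlin w).
Proof.
rewrite /dlin => x.
elim: (index_enum _) => [|i r IH].
  have -> : (fun h : 'rV[R]_n => \sum_(i <- [::]) w 0 i * h 0 i) = fun=> 0.
    by apply/funext => h; rewrite big_nil.
  exact: cst_continuous.
have -> : (fun h : 'rV[R]_n => \sum_(j <- i :: r) w 0 j * h 0 j) =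
   ((fun h : 'rV[R]_n => w 0 i * h 0 i) + (fun h : 'rV[R]_n => \sum_(j <- r) w 0 j * h 0 j)).
  by apply/funext => h; rewrite big_cons.
apply: continuousD => //.
apply: (@continuousM _ _ (fun=> w 0 i) (fun h : 'rV[R]_n => h 0 i)).
  exact: cst_continuous.
exact: coord_continuous.
Qed.


Variables (i0 : 'I_n) (hi0 : val i0 = 0%N) (a : R).

Lemma pred_i0 (i : 'I_n) : (val i == 0%N) = (i == i0).
Proof. by rewrite -val_eqE /= hi0. Qed.

Definition rest (v : 'rV[R]_n) := \sum_(i < n | i != i0) v 0 i.

Lemma coord1E (v : 'rV[R]_n) : coord1 v = v 0 i0.
Proof. by rewrite /coord1 (big_pred1 i0) // => i; rewrite /= pred_i0. Qed.

Lemma fobjE (v : 'rV[R]_n) : fobj a v = a * `|v 0 i0| + rest v.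
Proof.
rewrite /fobj coord1E /rest; congr (_ + _); apply: eq_bigl => i.
by rewrite pred_i0.
Qed.

Lemma restD (u v : 'rV[R]_n) : rest (u + v) = rest u + rest v.
Proof. by rewrite /rest -big_split; apply: eq_bigr => i _; rewrite mxE. Qed.

Definition gv (s : R) : 'rV[R]_n := \row_i (if i == i0 then a * s else 1).

Lemma dlin_gv s (h : 'rV[R]_n) : dlin (gv s) h = a * s * h 0 i0 + rest h.
Proof.
rewrite /dlin (bigD1 i0) //= mxE eqxx; congr (_ + _).
by apply: eq_bigr => i /negbTE hi; rewrite mxE hi mul1r.
Qed.

Lemma coord_small (x : 'rV[R]_n) : x 0 i0 != 0 ->
  \forall h \near (0 : 'rV[R]_n), `|(h : 'rV[R]_n) 0 i0| < `|x 0 i0|.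
Proof.
move=> hx; have xpos : 0 < `|x 0 i0| by rewrite normr_gt0.
have := @coord_continuous R 1 n 0 i0 0.
have H0 : nbhs ((0 : 'rV[R]_n) 0 i0) (fun y : R => `|y| < `|x 0 i0|).
  by rewrite mxE; exact: (@nbhs0_lt R R^o _ xpos).
by move=> H; exact: (H _ H0).

Qed.

Lemma fobj_loc (x : 'rV[R]_n) : x 0 i0 != 0 ->
  fobj a \o shift x = cst (fobj a x) + dlin (gv (Num.sg (x 0 i0))) +o_ (0 : 'rV[R]_n) id.
Proof.
move=> hx; apply/eqaddoP => e e0.
near=> h.
have hs : `|h 0 i0| < `|x 0 i0| by near: h; exact: coord_small.
suff -> : ((fobj a \o shift x) - (cst (fobj a x) + dlin (gv (Num.sg (x 0 i0))))) h = 0.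
  by rewrite normr0 mulr_ge0 // ltW.
rewrite -[LHS]/(fobj a (h + x) - (fobj a x + dlin (gv (Num.sg (x 0 i0))) h)).
rewrite !fobjE dlin_gv restD mxE.
have -> : `|h 0 i0 + x 0 i0| = Num.sg (x 0 i0) * (h 0 i0 + x 0 i0).
  have h1 := ler_norm (h 0 i0); have h2 := ler_norm (- h 0 i0).
  rewrite normrN in h2.
  move: hs; case: (ltrgt0P (x 0 i0)) => hxs hs.
  - rewrite gtr0_sg // mul1r gtr0_norm //; lra.
  - rewrite ltr0_sg // mulN1r ltr0_norm //; lra.
  - by move: (hx); rewrite hxs eqxx.
rewrite [`|x 0 i0|]normrEsg; ring.
Unshelve. all: by end_near. Qed.

Lemma diff_fobj (x : 'rV[R]_n) : x 0 i0 != 0 ->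
  ('d (fobj a) x : 'rV[R]_n -> R) = dlin (gv (Num.sg (x 0 i0))).
Proof. by move=> hx; apply: diff_unique; [exact: dlin_cont | exact: fobj_loc]. Qed.

Lemma differentiable_fobj (x : 'rV[R]_n) : x 0 i0 != 0 -> differentiable (fobj a) x.
Proof.
move=> hx; apply/diff_locallyP; rewrite diff_fobj //; split; first exact: dlin_cont.
exact: fobj_loc.
Qed.

Lemma dlin_delta (w : 'rV[R]_n) i : dlin w (delta_mx 0 i) = w 0 i.
Proof.
rewrite /dlin (bigD1 i) //= big1 => [|j hj]; first by rewrite !mxE !eqxx mulr1 addr0.
by rewrite !mxE (negbTE hj) andbF mulr0.
Qed.

Lemma grad_fobj (x : 'rV[R]_n) : x 0 i0 != 0 ->
  grad (fobj a) x = gv (Num.sg (x 0 i0)).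
Proof.
move=> hx; apply/rowP => i; rewrite /grad mxE diff_fobj //.
exact: dlin_delta.
Qed.

Lemma dotv_dlin (u v : 'rV[R]_n) : dotv u v = dlin u v.
Proof. by []. Qed.

Lemma restZ c (v : 'rV[R]_n) : rest (c *: v) = c * rest v.
Proof. by rewrite /rest mulr_sumr; apply: eq_bigr => i _; rewrite mxE. Qed.

Lemma restN (v : 'rV[R]_n) : rest (- v) = - rest v.
Proof. by rewrite -scaleN1r restZ mulN1r. Qed.

Lemma rest_gv s : rest (gv s) = (n - 1)%:R.
Proof.
rewrite /rest (eq_bigr (fun=> 1)) => [|i hi]; last by rewrite mxE (negbTE hi).
by rewrite sumr_const cardC1 card_ord subn1.
Qed.

End G.

Theorem theorem2 (R : realType) (n : nat) (hn : (2 <= n)%N)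
  (a : R) (ha : Num.sqrt ((n - 1)%:R) <= a)
  (c1 c2 : R) (hc1 : 0 < c1) (hc12 : c1 < c2) (hc2 : c2 < 1)
  (tau : R) (htau : tau = c1 + ((n - 1)%:R * (c1 - 1)) / (a ^+ 2))
  (x0 : 'rV[R]_n) (hx0 : coord1 x0 != 0)
  (x d : nat -> 'rV[R]_n) (t : nat -> R)
  (hxinit : x 0%N = x0)
  (hd : forall k, d k = - grad (fobj a) (x k))
  (ht : forall k, t k = (2 * `|coord1 (x k)|) / ((tau + 1) * a))
  (hxs : forall k, x k.+1 = x k + t k *: d k) :
  (forall k, Armijo (fobj a) c1 (x k) (d k) (t k) /\
             Wolfe (fobj a) c2 (x k) (d k) (t k)) /\
  (tau <= 0 -> forall M : R, exists k, fobj a (x k) < M).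
Proof.
have n0 : (0 < n)%N by apply: leq_trans hn.
pose i0 : 'I_n := Ordinal n0.
have hi0 : val i0 = 0%N by [].
set N : R := (n - 1)%:R.
have hN1 : 1 <= N by rewrite /N ler1n subn_gt0.
have hsN : 0 <= Num.sqrt N := sqrtr_ge0 N.
have haN : N <= a ^+ 2.
  have := sqr_sqrtr (le_trans ler01 hN1); rewrite -/N => <-.
  by rewrite ler_sqr ?nnegrE //; apply: le_trans ha.
have ha0 : 0 < a.
  have : 0 <= a by apply: le_trans ha.
  rewrite le0r => /orP [/eqP a0|//]; move: haN; rewrite a0 expr2 mulr0 => h0.
  lra.
have a2pos : 0 < a ^+ 2 by rewrite exprn_gt0.
have an0 : a != 0 by rewrite gt_eqF.
have key : tau * a ^+ 2 = c1 * a ^+ 2 + N * (c1 - 1).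
  by rewrite htau /N; field.
have htm1 : 0 < tau + 1.
  have h1 : 0 < (tau + 1) * a ^+ 2.
    rewrite mulrDl key mul1r.
    have : 0 <= (a ^+ 2 - N) * (1 - c1) by apply: mulr_ge0; lra.
    nra.
  by rewrite pmulr_lgt0 in h1.
have htl1 : tau < 1.
  have h1 : tau * a ^+ 2 < 1 * a ^+ 2.
    rewrite key mul1r. have : 0 <= N * (1 - c1) by apply: mulr_ge0; lra.
    nra.
  by rewrite ltr_pM2r in h1.
have tn0 : tau + 1 != 0 by rewrite gt_eqF.
have hr : (tau - 1) / (tau + 1) < 0 by rewrite pmulr_llt0 ?invr_gt0 //; lra.
have step : forall y z : 'rV[R]_n, y 0 i0 != 0 ->
  z = y + (2 * `|y 0 i0|) / ((tau + 1) * a) *: - grad (fobj a) y ->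
  [/\ z 0 i0 = y 0 i0 * ((tau - 1) / (tau + 1)),
      fobj a z = fobj a y - c1 * ((2 * `|y 0 i0|) / ((tau + 1) * a)) * (a ^+ 2 + N),
      dotv (grad (fobj a) y) (- grad (fobj a) y) = - (a ^+ 2 + N) &
      dotv (grad (fobj a) z) (- grad (fobj a) y) = a ^+ 2 - N].
  move=> y z hy ->; rewrite (@grad_fobj R n i0 hi0 a _ hy).
  set s := Num.sg (y 0 i0).
  set u := `|y 0 i0|.
  set tt := (2 * u) / ((tau + 1) * a).
  have ss : s * s = 1 by rewrite -expr2 sqr_sg hy.
  have sy : s * u = y 0 i0 by rewrite mulr_sg_norm.
  have upos : 0 < u by rewrite normr_gt0.
  have z0 : (y + tt *: - @gv R n i0 a s) 0 i0 = y 0 i0 * ((tau - 1) / (tau + 1)).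
    rewrite !mxE eqxx -sy /tt; field; apply/andP; split => //.
  have dd : dotv (@gv R n i0 a s) (- @gv R n i0 a s) = - (a ^+ 2 + N).
    rewrite dotv_dlin (@dlin_gv R n i0 a) (@restN R n i0) (@rest_gv R n i0) !mxE eqxx -/N.
    have -> : a * s * - (a * s) = - (a ^+ 2 * (s * s)) by ring.
    by rewrite ss mulr1 opprD.
  split => //.
  - rewrite !(@fobjE R n i0 hi0 a) z0 (@restD R n i0) (@restZ R n i0) (@restN R n i0) (@rest_gv R n i0) -/N normrM (ltr0_norm hr) -/u.
    have e1 : a * u * ((tau - 1) / (tau + 1) + 1) = tau * a ^+ 2 * tt.
      by rewrite /tt; field; apply/andP; split.
    have e2 : c1 * tt * (a ^+ 2 + N) = tt * (tau * a ^+ 2 + N) by rewrite key; ring.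
    rewrite e2; lra.
  - have zn : y 0 i0 * ((tau - 1) / (tau + 1)) != 0 by rewrite mulf_neq0 // lt_eqF.
    rewrite -z0 in zn; rewrite (@grad_fobj R n i0 hi0 a _ zn) z0 sgrM (ltr0_sg hr) -/s.
    rewrite dotv_dlin (@dlin_gv R n i0 a) (@restN R n i0) (@rest_gv R n i0) !mxE eqxx -/N.
    have -> : a * (s * -1) * - (a * s) = a ^+ 2 * (s * s) by ring.
    by rewrite ss mulr1.
have c1e : forall k, coord1 (x k) = x k 0 i0 := fun k => @coord1E R n i0 hi0 (x k).
have stepk : forall k, x k 0 i0 != 0 ->
  [/\ x k.+1 0 i0 = x k 0 i0 * ((tau - 1) / (tau + 1)),
      fobj a (x k.+1) = fobj a (x k) - c1 * ((2 * `|x k 0 i0|) / ((tau + 1) * a)) * (a ^+ 2 + N),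
      dotv (grad (fobj a) (x k)) (- grad (fobj a) (x k)) = - (a ^+ 2 + N) &
      dotv (grad (fobj a) (x k.+1)) (- grad (fobj a) (x k)) = a ^+ 2 - N].
  by move=> k hk; apply: step => //; rewrite hxs hd ht c1e.
have nz : forall k, x k 0 i0 != 0.
  elim=> [|k IH]; first by rewrite hxinit -(@coord1E R n i0 hi0).
  by have [h1 _ _ _] := stepk k IH; rewrite h1 mulf_neq0 // lt_eqF.
split.
  move=> k; have [h1 h2 h3 h4] := stepk k (nz k).
  have hz : x k + t k *: d k = x k.+1 by rewrite hxs.
  split.
  - rewrite /Armijo hz h2 hd h3 ht c1e mulrN; exact: lexx.
  - rewrite /Wolfe hz; split; first apply: (@differentiable_fobj R n i0 hi0 a _ (nz k.+1)).
    rewrite hd [X in _ <= X]h4 [X in _ * X <= _]h3; apply: (@le_trans _ _ 0).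
      rewrite mulrN oppr_le0; apply: mulr_ge0.
        exact: (ltW (lt_trans hc1 hc12)).
      exact: (addr_ge0 (ltW a2pos) (le_trans ler01 hN1)).
    rewrite subr_ge0; exact: haN.
move=> hT M.
have rge1 : 1 <= - ((tau - 1) / (tau + 1)).
  rewrite -mulNr opprB ler_pdivlMr // mul1r; lra.
have ugrow : forall k, `|x 0%N 0 i0| <= `|x k 0 i0|.
  elim=> [|k IH] //; have [h1 _ _ _] := stepk k (nz k).
  rewrite h1 normrM (ltr0_norm hr); apply: (le_trans IH).
  by rewrite ler_peMr.
set tt0 := 2 * `|x 0%N 0 i0| / ((tau + 1) * a).
set del := c1 * tt0 * (a ^+ 2 + N).
have tt0pos : 0 < tt0.
  by rewrite /tt0 divr_gt0 ?mulr_gt0 // normr_gt0 nz.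
have delpos : 0 < del.
  rewrite /del; apply: mulr_gt0; first exact: mulr_gt0 hc1 tt0pos.
  exact: addr_gt0 a2pos (lt_le_trans ltr01 hN1).
have fdec : forall k : nat, fobj a (x k) <= fobj a (x 0%N) - k%:R * del.
  elim=> [|k IH]; first by rewrite mul0r subr0.
  have [_ h2 _ _] := stepk k (nz k); rewrite h2.
  have hk : del <= c1 * (2 * `|x k 0 i0| / ((tau + 1) * a)) * (a ^+ 2 + N).
    rewrite /del ler_pM2r ?ler_pM2l //; last lra.
    by rewrite ler_pM2r ?ler_pM2l ?invr_gt0 ?mulr_gt0.
  have -> : k.+1%:R = k%:R + 1 :> R by rewrite -natr1.
  lra.
have zK := archi_boundP (normr_ge0 ((fobj a (x 0%N) - M) / del)).
exists (Num.Def.archi_bound `|(fobj a (x 0%N) - M) / del|).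
set K := Num.Def.archi_bound _ in zK *.
have h1 : (fobj a (x 0%N) - M) / del < K%:R := le_lt_trans (ler_norm _) zK.
rewrite ltr_pdivrMr // in h1.
have := fdec K; lra.
Qed.
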